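(* Let $f:\mathcal{S}\to\mathbb{R}$ be continuously differentiable with $f^{\inf}:=\inf_{X\in\mathcal{S}}f(X)>-\infty$, and suppose $f$ is layer-wise $(L^0,L^1)$-smooth with constants $L^0=(L^0_1,\dots,L^0_p)\in\mathbb{R}^p_+$ and $L^1=(L^1_1,\dots,L^1_p)$ with $L^1_i>0$ for all $i$. Fix $\varepsilon>0$ and let $X^0,X^1,\dots$ be the iterates of deterministic Gluon run from $X^0$ with radii $$t_i^k=\frac{\|\nabla_i f(X^k)\|_{(i)\star}}{L^0_i+L^1_i\|\nabla_i f(X^k)\|_{(i)\star}}$$ (with $t_i^k:=0$, i.e. $X_i^{k+1}=X_i^k$, whenever $\nabla_i f(X^k)=0$). Let $\Delta^0:=f(X^0)-f^{\inf}$, $H:=\frac1p\sum_{j=1}^p \frac{1}{L^1_j}$, and $$K:=\left\lceil \frac{2\Delta^0\sum_{i=1}^p \frac{L^0_i}{(L^1_i)^2}}{\varepsilon^2 H^2}+\frac{2\Delta^0}{\varepsilon H}\right\rceil .$$ Then, provided $K\ge 1$, $$\min_{k=0,\dots,K-1}\ \sum_{i=1}^p \frac{1/L^1_i}{H}\,\|\nabla_i f(X^k)\|_{(i)\star}\le\varepsilon .$$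
   Context: $\mathcal{S}=\mathcal{S}_1\times\cdots\times\mathcal{S}_p$ with $\mathcal{S}_i=\mathbb{R}^{m_i\times n_i}$; an element is written $X=[X_1,\dots,X_p]$. Each $\mathcal{S}_i$ carries the trace inner product $\langle X_i,Y_i\rangle_{(i)}=\operatorname{tr}(X_i^\top Y_i)$ and an arbitrary norm $\|\cdot\|_{(i)}$ with dual norm $\|Y_i\|_{(i)\star}=\sup_{\|Z_i\|_{(i)}\le 1}\langle Y_i,Z_i\rangle_{(i)}$. $\nabla_i f(X)\in\mathcal{S}_i$ denotes the block of the gradient of $f$ corresponding to $X_i$ (w.r.t. the sum of trace inner products). Layer-wise $(L^0,L^1)$-smoothness: for all $i$ and all $X,Y\in\mathcal{S}$, $\|\nabla_i f(X)-\nabla_i f(Y)\|_{(i)\star}\le (L^0_i+L^1_i\|\nabla_i f(X)\|_{(i)\star})\|X_i-Y_i\|_{(i)}$. Deterministic Gluon: for $k=0,1,\dots$ and each $i=1,\dots,p$, given radius $t_i^k\ge0$, set $X_i^{k+1}\in\arg\min\{\langle \nabla_i f(X^k),X_i\rangle_{(i)}: X_i\in\mathcal{S}_i,\ \|X_i-X_i^k\|_{(i)}\le t_i^k\}$ (any minimizer), and $X^{k+1}=[X_1^{k+1},\dots,X_p^{k+1}]$. *)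

(* Defs.v *)
From mathcomp Require Import all_boot all_order all_algebra.
From mathcomp Require Import all_classical all_reals.
Set Implicit Arguments. Unset Strict Implicit. Unset Printing Implicit Defensive.
Import Order.TTheory GRing.Theory Num.Theory.
Local Open Scope ring_scope.
Local Open Scope classical_set_scope.

Definition prodS (R : realType) (p : nat) (m n : 'I_p -> nat) : Type :=
  forall i : 'I_p, 'M[R]_(m i, n i).

Section Defs.
Variables (R : realType) (p : nat) (m n : 'I_p -> nat).
Local Notation S := (prodS R m n).

Definition addS (X Y : S) : S := fun i => X i + Y i.
Definition subS (X Y : S) : S := fun i => X i - Y i.

Definition ipS (X Y : S) : R := \sum_(i < p) \tr ((X i)^T *m Y i).

(* a reference norm on S (all norms on the finite-dim. S are equivalent),
   used only to express differentiability / continuity *)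
Definition nS (X : S) : R :=
  \sum_(i < p) \sum_(a < m i) \sum_(b < n i) `|X i a b|.

Definition is_gradient (f : S -> R) (g : S -> S) : Prop :=
  forall X : S, forall eps : R, 0 < eps ->
    exists2 d : R, 0 < d & forall H : S, nS H < d ->
      `|f (addS X H) - f X - ipS (g X) H| <= eps * nS H.

Definition continuousS (g : S -> S) : Prop :=
  forall X : S, forall eps : R, 0 < eps ->
    exists2 d : R, 0 < d & forall Y : S, nS (subS Y X) < d ->
      nS (subS (g Y) (g X)) < eps.

Definition C1_with_gradient (f : S -> R) (g : S -> S) : Prop :=
  is_gradient f g /\ continuousS g.
End Defs.

Definition is_norm (R : realType) (a b : nat) (N : 'M[R]_(a, b) -> R) : Prop :=
  (forall X, N X = 0 -> X = 0) /\
  (forall (c : R) X, N (c *: X) = `|c| * N X) /\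
  (forall X Y, N (X + Y) <= N X + N Y).

Definition dual_norm (R : realType) (a b : nat) (N : 'M[R]_(a, b) -> R)
  (Y : 'M[R]_(a, b)) : R :=
  sup [set \tr (Y^T *m Z) | Z in [set Z : 'M[R]_(a, b) | N Z <= 1]].

Definition layerwise_L0L1_smooth (R : realType) (p : nat) (m n : 'I_p -> nat)
  (N : forall i : 'I_p, 'M[R]_(m i, n i) -> R) (g : prodS R m n -> prodS R m n)
  (L0 L1 : 'I_p -> R) : Prop :=
  forall (i : 'I_p) (X Y : prodS R m n),
    dual_norm (N i) (g X i - g Y i)
      <= (L0 i + L1 i * dual_norm (N i) (g X i)) * N i (X i - Y i).

Definition gluon_radius (R : realType) (a b : nat) (N : 'M[R]_(a, b) -> R)
  (G : 'M[R]_(a, b)) (l0 l1 : R) : R :=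
  if G == 0 then 0 else dual_norm N G / (l0 + l1 * dual_norm N G).

Definition lmo_step (R : realType) (a b : nat) (N : 'M[R]_(a, b) -> R)
  (G X_old X_new : 'M[R]_(a, b)) (t : R) : Prop :=
  N (X_new - X_old) <= t /\
  forall Z : 'M[R]_(a, b), N (Z - X_old) <= t ->
    \tr (G^T *m X_new) <= \tr (G^T *m Z).

Definition gluon_iterates (R : realType) (p : nat) (m n : 'I_p -> nat)
  (N : forall i : 'I_p, 'M[R]_(m i, n i) -> R) (g : prodS R m n -> prodS R m n)
  (L0 L1 : 'I_p -> R) (Xs : nat -> prodS R m n) : Prop :=
  forall (k : nat) (i : 'I_p),
    lmo_step (N i) (g (Xs k) i) (Xs k i) (Xs k.+1 i)
      (gluon_radius (N i) (g (Xs k) i) (L0 i) (L1 i)).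

(* Main.v *)
Require Import Defs.
From mathcomp Require Import all_boot all_order all_algebra.
From mathcomp Require Import all_classical all_reals.
From mathcomp Require topology normedtype derive.
From mathcomp Require Import ring lra.
Import Order.TTheory GRing.Theory Num.Theory.
Local Open Scope ring_scope.
Local Open Scope classical_set_scope.

Module Part12.
Import topology normedtype derive.
Import numFieldNormedType.Exports.
Set Implicit Arguments. Unset Strict Implicit. Unset Printing Implicit Defensive.

Section NormBasics.
Variables (R : realType) (a b : nat) (N : 'M[R]_(a, b) -> R).
Hypothesis hN : is_norm N.

Lemma nN0 : N 0 = 0.
Proof. case: hN => _ [hZ _]; by rewrite -(scale0r 0) hZ normr0 mul0r. Qed.

Lemma nNN X : N (- X) = N X.
Proof. case: hN => _ [hZ _]; by rewrite -scaleN1r hZ normrN normr1 mul1r. Qed.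

Lemma nN_ge0 X : 0 <= N X.
Proof.
case: hN => _ [_ hT]; have := hT X (- X); rewrite subrr nN0 nNN.
move=> H; have : 0 <= N X *+ 2 by rewrite mulr2n.
by rewrite pmulrn_lge0.
Qed.

Lemma nNZ (c : R) X : N (c *: X) = `|c| * N X.
Proof. by case: hN => _ [hZ _]. Qed.

Lemma nND X Y : N (X + Y) <= N X + N Y.
Proof. by case: hN => _ [_ hT]. Qed.

Lemma nN_eq0 X : N X = 0 -> X = 0.
Proof. by case: hN => H _; exact: H. Qed.

Lemma nN_sum (I : finType) (F : I -> 'M[R]_(a, b)) :
  N (\sum_i F i) <= \sum_i N (F i).
Proof.
apply: (big_ind2 (fun x y => N x <= y)) => //; first by rewrite nN0.
by move=> x1 x2 y1 y2 h1 h2; apply: le_trans (nND _ _) _; exact: lerD.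
Qed.

Lemma nNB X Y : N X - N Y <= N (X - Y).
Proof. by rewrite lerBlDr; apply: le_trans (nND _ _); rewrite subrK. Qed.

End NormBasics.

Lemma mx_norm_entry (R : realType) k (v : 'rV[R]_k) j : `|v 0 j| <= `|v|.
Proof.
have -> : `|v| = mx_norm v by []. rewrite mx_normrE.
exact: (le_bigmax _ (fun ij : 'I_1 * 'I_k => `|v ij.1 ij.2|) (0, j)).
Qed.

Lemma rV_norm_lb (R : realType) k (N' : 'rV[R]_k -> R) : is_norm N' ->
  exists2 c, 0 < c & forall v, c * `|v| <= N' v.
Proof.
move=> hN.
set M := \sum_(j < k) N' 'e_j.
have M0 : 0 <= M by apply: sumr_ge0 => j _; exact: nN_ge0.
have Nub v : N' v <= M * `|v|.
  rewrite {1}(row_sum_delta v); apply: le_trans (nN_sum hN _) _.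
  rewrite /M mulr_suml; apply: ler_sum => j _; rewrite nNZ // mulrC.
  by apply: ler_wpM2l; [exact: nN_ge0 | exact: mx_norm_entry].
have cN : continuous (fun v : 'rV[R]_k => N' v).
  move=> x A /= /(nbhs_ballP (N' x)) [e e0 eA].
  have e1 : 0 < e / (M + 1) by rewrite divr_gt0 // ltr_wpDl.
  apply/nbhs_ballP; exists (e / (M + 1)) => // t.
  rewrite -ball_normE /ball_ /= => Ht; apply: eA.
  rewrite -ball_normE /ball_ /=.
  have H1 : `|N' x - N' t| <= N' (x - t).
    rewrite ler_norml; apply/andP; split; last exact: nNB.
    by rewrite lerNl opprB -(nNN hN (x - t)) opprB nNB.
  apply: le_lt_trans H1 _; apply: le_lt_trans (Nub _) _.
  have M1 : 0 < M + 1 by rewrite ltr_wpDl.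
  move: Ht; rewrite ltr_pdivlMr // => Ht.
  apply: le_lt_trans Ht; rewrite mulrC; apply: ler_wpM2l; [exact: normr_ge0 | by rewrite lerDl].
have [Ane|Ae] := pselect ([set v : 'rV[R]_k | `|v| = 1] !=set0); last first.
  exists 1 => // v; rewrite mul1r.
  have [->|vn0] := eqVneq v 0; first by rewrite normr0 nN0.
  exfalso; apply: Ae; exists (`|v|^-1 *: v) => /=.
  by rewrite normrZ normrV ?unitfE ?normr_eq0 // normr_id mulVf // normr_eq0.
have Acl : closed [set v : 'rV[R]_k | `|v| = 1].
  have -> : [set v : 'rV[R]_k | `|v| = 1] = (fun v : 'rV[R]_k => `|v|) @^-1` [set x : R | x = 1] by [].
  apply: preimage_closed; last exact: closed_eq.
  by move=> x _; exact: norm_continuous.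
have Abd : bounded_set [set v : 'rV[R]_k | `|v| = 1].
  by exists 1; split => // M' M1 x /= ->; exact: ltW.
have Acp := bounded_closed_compact Abd Acl.
have [c0 c0A c0min] := EVT_min_rV Ane Acp (continuous_subspaceT cN).
rewrite inE /= in c0A.
have c0pos : 0 < N' c0.
  rewrite lt_def nN_ge0 // andbT; apply/eqP => /(nN_eq0 hN) c00.
  by move: c0A; rewrite c00 normr0 => /eqP; rewrite eq_sym oner_eq0.
exists (N' c0) => // v.
have [->|vn0] := eqVneq v 0; first by rewrite normr0 mulr0 nN0.
have vpos : 0 < `|v| by rewrite normr_gt0.
have := c0min (`|v|^-1 *: v); rewrite inE /= normrZ normrV ?unitfE ?normr_eq0 //.
rewrite normr_id mulVf ?normr_eq0 // => /(_ erefl).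
rewrite nNZ // normrV ?unitfE ?normr_eq0 // normr_id.
by rewrite ler_pdivlMl // mulrC.
Qed.

Lemma mx_norm_lb (R : realType) a b (N : 'M[R]_(a, b) -> R) : is_norm N ->
  exists2 c : R, 0 < c & forall (Z : 'M[R]_(a, b)) i j, c * `|Z i j| <= N Z.
Proof.
move=> hN.
have hN' : is_norm (fun v : 'rV[R]_(a * b) => N (vec_mx v)).
  split; [|split].
  - move=> v /(nN_eq0 hN) h; by rewrite -(vec_mxK v) h linear0.
  - by move=> c v /=; rewrite linearZ /= nNZ.
  - by move=> v w /=; rewrite linearD /= nND.
have [c c0 Hc] := rV_norm_lb hN'.
exists c => // Z i j; rewrite -mxvecE.
have := Hc (mxvec Z); rewrite mxvecK; apply: le_trans.
by apply: ler_wpM2l; [exact: ltW | exact: mx_norm_entry].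
Qed.

Lemma trace_sum (R : realType) a b (Y Z : 'M[R]_(a, b)) :
  \tr (Y^T *m Z) = \sum_i \sum_k Y k i * Z k i.
Proof. by rewrite /mxtrace; apply: eq_bigr => i _; rewrite mxE; apply: eq_bigr => k _; rewrite mxE. Qed.

Section Dual.
Variables (R : realType) (a b : nat) (N : 'M[R]_(a, b) -> R).
Hypothesis hN : is_norm N.

Lemma dual_has_sup Y :
  has_sup [set \tr (Y^T *m Z) | Z in [set Z : 'M[R]_(a, b) | N Z <= 1]].
Proof.
split; first by exists 0, 0 => //=; rewrite ?nN0 ?mulmx0 ?mxtrace0.
have [c c0 Hc] := mx_norm_lb hN.
exists (\sum_i \sum_k `|Y k i| / c) => _ [Z /= NZ <-].
rewrite trace_sum; apply: ler_sum => i _; apply: ler_sum => k _.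
apply: le_trans (ler_norm _) _; rewrite normrM; apply: ler_wpM2l => //.
by rewrite -div1r ler_pdivlMr // mulrC; apply: le_trans (Hc _ _ _) NZ.
Qed.

Lemma dual_ge0 Y : 0 <= dual_norm N Y.
Proof.
apply: (sup_upper_bound (dual_has_sup Y)).
by exists 0 => /=; rewrite ?nN0 ?mulmx0 ?mxtrace0.
Qed.

Lemma dual0 : dual_norm N 0 = 0.
Proof.
apply/eqP; rewrite eq_le dual_ge0 andbT; apply: ge_sup.
  by exists 0, 0 => //=; rewrite ?nN0 ?mulmx0 ?mxtrace0.
by move=> _ [Z _ <-]; rewrite trmx0 mul0mx mxtrace0.
Qed.

Lemma dual_holder Y D : \tr (Y^T *m D) <= dual_norm N Y * N D.
Proof.
have [->|Dn0] := eqVneq D 0; first by rewrite mulmx0 mxtrace0 nN0 // mulr0.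
have ND : 0 < N D by rewrite lt_def nN_ge0 // andbT; apply/eqP => /(nN_eq0 hN) /eqP; apply/negP.
have := sup_upper_bound (dual_has_sup Y) (ex_intro2 _ _ ((N D)^-1 *: D) _ erefl).
rewrite -scalemxAr mxtraceZ /= nNZ // normrV ?unitfE ?gt_eqF // gtr0_norm //.
rewrite mulVf ?gt_eqF // lexx => /(_ isT).
by rewrite mulrC ler_pdivrMr // mulrC.
Qed.

Lemma dual_lmo G Xo Xn t : 0 <= t -> lmo_step N G Xo Xn t ->
  \tr (G^T *m (Xn - Xo)) <= - (t * dual_norm N G).
Proof.
move=> t0 [_ Hmin]; apply/ler_addgt0Pr => e e0.
have te : 0 < e / (t + 1) by rewrite divr_gt0 // ltr_wpDl.
have [_ [Z /= NZ <-] HZ] := sup_adherent te (dual_has_sup G).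
have Zin : N (Xo - t *: Z - Xo) <= t.
  by rewrite addrAC subrr add0r nNN // nNZ // ger0_norm // -{2}(mulr1 t) ler_wpM2l.
have := Hmin _ Zin.
rewrite !mulmxBr !linearB /= -scalemxAr mxtraceZ => H.
rewrite lerBlDl; apply: le_trans H _; rewrite lerD2l.
have H2 : t * (dual_norm N G - e / (t + 1)) <= t * \tr (G^T *m Z).
  by apply: ler_wpM2l => //; exact: ltW.
have H3 : t * (e / (t + 1)) <= e.
  rewrite mulrA ler_pdivrMr ?ltr_wpDl // mulrDr mulr1 mulrC lerDl.
  exact: ltW.
rewrite mulrBr in H2; lra.
Qed.
End Dual.

Unset Implicit Arguments.
End Part12.
Import Part12.

Module Part3.
Set Implicit Arguments.

Lemma creep (R : realType) (phi : R -> R) :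
  (forall t, 0 <= t <= 1 -> forall e, 0 < e -> exists2 d, 0 < d & forall h, 0 < h < d ->
     phi (t + h) <= phi t + e * h /\ phi t <= phi (t - h) + e * h) ->
  phi 1 <= phi 0.
Proof.
move=> Hd; apply/ler_addgt0Pr => e e0.
pose A := [set s : R | (0 <= s <= 1) /\ forall u, 0 <= u <= s -> phi u <= phi 0 + e * u].
have A0 : A 0.
  split; first by rewrite lexx ler01.
  move=> u /andP[u0 u1]; have -> : u = 0 by apply/eqP; rewrite eq_le u1 u0.
  by rewrite mulr0 addr0.
have hA : has_sup A by split; [exists 0 | exists 1 => x [/andP[_ ?] _]].
set s := sup A.
have s0 : 0 <= s by exact: (sup_upper_bound hA).
have s1 : s <= 1 by apply: ge_sup; [exists 0 | move=> x [/andP[_ ?] _]].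
have C1 : forall u, 0 <= u < s -> phi u <= phi 0 + e * u.
  move=> u /andP[u0 us].
  have su : 0 < s - u by rewrite subr_gt0.
  have [s' [_ Hs'] Hlt] := sup_adherent su hA.
  apply: Hs'; rewrite u0 /=; apply: ltW; move: Hlt; rewrite /s; lra.
have s01 : 0 <= s <= 1 by rewrite s0 s1.
have C2 : phi s <= phi 0 + e * s.
  have [sz|spos] := eqVneq s 0; first by rewrite sz mulr0 addr0.
  have spos' : 0 < s by rewrite lt_def spos s0.
  have [d d0 Hh] := Hd s s01 e e0.
  pose h := Num.min (d / 2) s.
  have h0 : 0 < h by rewrite lt_min spos' divr_gt0.
  have hd : h < d by rewrite gt_min; apply/orP; left; lra.
  have hs : h <= s by rewrite ge_min lexx orbT.
  have [_ H2] : phi (s + h) <= phi s + e * h /\ phi s <= phi (s - h) + e * h.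
    by apply: Hh; rewrite h0 hd.
  apply: le_trans H2 _.
  have : phi (s - h) <= phi 0 + e * (s - h).
    apply: C1; apply/andP; split; lra.
  rewrite mulrBr; lra.
have sA : A s.
  split; first by rewrite s0 s1.
  move=> u /andP[u0 us]; have [us'|us'] := ltP u s; first by apply: C1; rewrite u0.
  by have -> : u = s by apply/eqP; rewrite eq_le us us'.
have s_eq1 : s = 1.
  apply/eqP; rewrite eq_le s1 /=; rewrite leNgt; apply/negP => slt1.
  have [d d0 Hh] := Hd s s01 e e0.
  pose h := Num.min (d / 2) (1 - s).
  have h0 : 0 < h by rewrite lt_min subr_gt0 slt1 divr_gt0.
  have hd : h < d by rewrite gt_min; apply/orP; left; lra.
  have hs : h <= 1 - s by rewrite ge_min lexx orbT.
  have : A (s + h).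
    split; first by apply/andP; split; lra.
    move=> u /andP[u0 ush]; have [us'|us'] := leP u s; first by case: sA => _; apply; rewrite u0.
    have [H1 _] : phi (s + (u - s)) <= phi s + e * (u - s) /\ phi s <= phi (s - (u - s)) + e * (u - s).
      by apply: Hh; apply/andP; split; lra.
    move: H1; rewrite addrC subrK => H1; apply: le_trans H1 _.
    case: sA => _ /(_ s) H3; have {}H3 := H3 (introT andP (conj s0 (lexx s))).
    rewrite mulrBr; lra.
  move/(sup_upper_bound hA); rewrite -/s; lra.
case: sA => _ /(_ 1); rewrite s_eq1 ler01 lexx /= => /(_ isT); by rewrite mulr1.
Qed.

Unset Implicit Arguments.
End Part3.
Import Part3.
Unset Implicit Arguments.


Lemma trB (R : realType) a b (A B D : 'M[R]_(a, b)) :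
  \tr ((A - B)^T *m D) = \tr (A^T *m D) - \tr (B^T *m D).
Proof.
rewrite !trace_sum -sumrB; apply: eq_bigr => i _; rewrite -sumrB.
by apply: eq_bigr => k _; rewrite !mxE mulrBl.
Qed.

Lemma trN (R : realType) a b (A D : 'M[R]_(a, b)) :
  \tr (A^T *m (- D)) = - \tr (A^T *m D).
Proof.
rewrite !trace_sum -sumrN; apply: eq_bigr => i _; rewrite -sumrN.
by apply: eq_bigr => k _; rewrite !mxE mulrN.
Qed.

Lemma trZ (R : realType) a b (A D : 'M[R]_(a, b)) c :
  \tr (A^T *m (c *: D)) = c * \tr (A^T *m D).
Proof. by rewrite -scalemxAr mxtraceZ. Qed.

Section Descent.
Variables (R : realType) (p : nat) (m n : 'I_p -> nat).
Variables (N : forall i : 'I_p, 'M[R]_(m i, n i) -> R)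
  (f : prodS R m n -> R) (g : prodS R m n -> prodS R m n) (L0 L1 : 'I_p -> R).
Hypotheses (hN : forall i, is_norm (N i)) (hg : is_gradient f g)
  (hL0 : forall i, 0 <= L0 i) (hL1 : forall i, 0 < L1 i)
  (hs : layerwise_L0L1_smooth N g L0 L1).

Local Notation S := (prodS R m n).

Lemma ipS_scale (G D : S) c : ipS G (fun i => c *: D i) = c * ipS G D.
Proof. by rewrite /ipS mulr_sumr; apply: eq_bigr => i _; rewrite trZ. Qed.

Lemma nS_scale (D : S) c : nS (fun i => c *: D i) = `|c| * nS D.
Proof.
rewrite /nS mulr_sumr; apply: eq_bigr => i _; rewrite mulr_sumr; apply: eq_bigr => k _.
by rewrite mulr_sumr; apply: eq_bigr => l _; rewrite mxE normrM.
Qed.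

Lemma nS_ge0 (D : S) : 0 <= nS D.
Proof. by apply: sumr_ge0 => i _; apply: sumr_ge0 => k _; apply: sumr_ge0. Qed.

Definition Yt (X D : S) (t : R) : S := fun i => X i + t *: D i.

Lemma Yt_add X D t h : addS (Yt X D t) (fun i => h *: D i) = Yt X D (t + h).
Proof.
apply: functional_extensionality_dep => i; rewrite /addS /Yt.
by rewrite scalerDl addrA.
Qed.

Lemma Yt0 X D : Yt X D 0 = X.
Proof. by apply: functional_extensionality_dep => i; rewrite /Yt scale0r addr0. Qed.

Lemma Yt1 X D : Yt X D 1 = addS X D.
Proof. by apply: functional_extensionality_dep => i; rewrite /Yt scale1r. Qed.

Definition Cst (X D : S) : R :=
  \sum_i (L0 i + L1 i * dual_norm (N i) (g X i)) * N i (D i) ^+ 2.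

Lemma Cst_ge0 X D : 0 <= Cst X D.
Proof.
apply: sumr_ge0 => i _; apply: mulr_ge0; last exact: sqr_ge0.
by apply: addr_ge0 => //; apply: mulr_ge0; [exact: ltW | exact: dual_ge0].
Qed.

Lemma deriv_sign X D t : 0 <= t ->
  ipS (g (Yt X D t)) D - ipS (g X) D <= t * Cst X D.
Proof.
move=> t0; rewrite /ipS -sumrB /Cst mulr_sumr; apply: ler_sum => i _.
set G1 := g (Yt X D t) i; set G2 := g X i.
have -> : \tr (G1^T *m D i) - \tr (G2^T *m D i) = \tr ((G2 - G1)^T *m (- D i)).
  by rewrite trN trB opprB.
apply: le_trans (dual_holder (hN i) _ _) _.
rewrite nNN //.
have H := hs i X (Yt X D t); rewrite -/G1 -/G2 in H.
have E : X i - Yt X D t i = - (t *: D i) by rewrite /Yt opprD addrA subrr add0r.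
rewrite E in H.
move: H; rewrite nNN // nNZ // ger0_norm // => H.
have ND0 := nN_ge0 (hN i) (D i).
apply: le_trans (ler_wpM2r ND0 H) _.
by rewrite le_eqVlt; apply/orP; left; apply/eqP; rewrite expr2; ring.
Qed.

Lemma descent X D :
  f (addS X D) <= f X + ipS (g X) D + Cst X D / 2.
Proof.
set C := Cst X D; set ip0 := ipS (g X) D.
pose phi t := f (Yt X D t) - t * ip0 - t ^+ 2 * C / 2.
suff : phi 1 <= phi 0.
  by rewrite /phi Yt0 Yt1 expr1n expr0n /= !mul0r mul1r subr0 subr0 => H; lra.
apply: creep => t /andP[t0 t1] e e0.
set ND := nS D.
have ND0 : 0 <= ND := nS_ge0 D.
have C0 : 0 <= C := Cst_ge0 X D.
have e' : 0 < e / (2 * (ND + 1)) by rewrite divr_gt0 // mulr_gt0 // ltr_wpDl.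
have [d1 d10 Hd1] := hg (Yt X D t) _ e'.
exists (Num.min (d1 / (ND + 1)) (e / (C + 1))).
  by rewrite lt_min !divr_gt0 // ltr_wpDl.
move=> h /andP[h0]; rewrite lt_min => /andP[hd1 hdC].
set ipt := ipS (g (Yt X D t)) D.
have Dv := deriv_sign X D t t0; rewrite -/ipt -/ip0 -/C in Dv.
have Dvh : h * ipt - h * ip0 <= h * (t * C).
  by rewrite -mulrBr; apply: ler_wpM2l => //; exact: ltW.
have hND0 : 0 <= h * ND by rewrite mulr_ge0 // ltW.
have hND : h * ND < d1.
  move: hd1; rewrite ltr_pdivlMr ?ltr_wpDl // => hd1; apply: le_lt_trans hd1.
  by rewrite ler_wpM2l ?lerDl // ltW.
have F1 : e / (2 * (ND + 1)) * (h * ND) <= e * h / 2.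
  have ND1 : 0 < ND + 1 by rewrite ltr_wpDl.
  have -> : e / (2 * (ND + 1)) * (h * ND) = (e * h / 2) * (ND / (ND + 1)).
    by field; rewrite gt_eqF.
  apply: ler_piMr; first by rewrite divr_ge0 // mulr_ge0 // ltW.
  by rewrite ler_pdivrMr // mul1r lerDl.
have F2 : h ^+ 2 * C <= e * h.
  move: hdC; rewrite ltr_pdivlMr ?ltr_wpDl // => hdC.
  have : h * C <= e by apply: le_trans (ltW hdC); rewrite ler_wpM2l ?lerDl // ltW.
  move=> hC; rewrite expr2 -mulrA mulrC; apply: ler_wpM2r => //; exact: ltW.
have Hp := Hd1 (fun i => h *: D i).
rewrite nS_scale gtr0_norm // Yt_add ipS_scale in Hp.
have {Hp} /ler_normlP [_ Hp] := Hp hND.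
have Hm := Hd1 (fun i => (- h) *: D i).
rewrite nS_scale normrN gtr0_norm // Yt_add ipS_scale in Hm.
have {Hm} /ler_normlP [Hm _] := Hm hND.
have E1 : phi (t + h) - phi t = (f (Yt X D (t + h)) - f (Yt X D t) - h * ipt)
   + (h * ipt - h * ip0 - h * (t * C)) - h ^+ 2 * C / 2.
  by rewrite /phi /=; field.
have E2 : phi t - phi (t - h) = - (f (Yt X D (t - h)) - f (Yt X D t) - (- h) * ipt)
   + (h * ipt - h * ip0 - h * (t * C)) + h ^+ 2 * C / 2.
  by rewrite /phi /=; field.
have hC2 : 0 <= h ^+ 2 * C by rewrite mulr_ge0 // sqr_ge0.
rewrite -/ipt -/ND in Hp Hm.
split; lra.
Qed.


End Descent.

Lemma step_dec (R : realType) (p : nat) (m n : 'I_p -> nat)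
  (N : forall i : 'I_p, 'M[R]_(m i, n i) -> R)
  (f : prodS R m n -> R) (g : prodS R m n -> prodS R m n)
  (L0 L1 : 'I_p -> R) (Xs : nat -> prodS R m n) :
  (forall i, is_norm (N i)) -> is_gradient f g ->
  (forall i, 0 <= L0 i) -> (forall i, 0 < L1 i) ->
  layerwise_L0L1_smooth N g L0 L1 -> gluon_iterates N g L0 L1 Xs ->
  forall k, f (Xs k.+1) <= f (Xs k) -
    (\sum_i dual_norm (N i) (g (Xs k) i) ^+ 2 /
        (L0 i + L1 i * dual_norm (N i) (g (Xs k) i))) / 2.
Proof.
move=> hN hg hL0 hL1 hs hit k.
set X := Xs k; set D : prodS R m n := subS (Xs k.+1) X.
have XD : addS X D = Xs k.+1.
  by apply: functional_extensionality_dep => i; rewrite /addS /D /subS addrC subrK.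
have := @descent R p m n N f g L0 L1 hN hg hL0 hL1 hs X D; rewrite XD => Hd; apply: le_trans Hd _.
rewrite -addrA lerD2l /ipS /Cst [X in _ + X]mulr_suml -big_split /=. rewrite mulr_suml -sumrN.
apply: ler_sum => i _.
set G := g X i; set a := dual_norm (N i) G; set b := L0 i + L1 i * a.
have a0 : 0 <= a := dual_ge0 (hN i) G.
have b0 : 0 <= b by rewrite addr_ge0 // mulr_ge0 // ltW.
set t := gluon_radius (N i) G (L0 i) (L1 i).
have t0 : 0 <= t by rewrite /t /gluon_radius; case: ifP => // _; rewrite divr_ge0.
have lmo := hit k i; rewrite -/X -/G -/t in lmo.
have Htr := dual_lmo (hN i) t0 lmo; rewrite -/a in Htr.
have ND0 := nN_ge0 (hN i) (D i).
have HN : N i (D i) <= t by case: lmo.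
have HN2 : N i (D i) ^+ 2 <= t ^+ 2 by rewrite !expr2 ler_pM.
have Hb : b * N i (D i) ^+ 2 / 2 <= b * t ^+ 2 / 2.
  by rewrite ler_pM2r ?invr_gt0 ?ltr0Sn // ler_wpM2l.
have Dt : D i = Xs k.+1 i - X i by [].
rewrite Dt.
apply: le_trans (lerD Htr Hb) _.
rewrite le_eqVlt; apply/orP; left; apply/eqP.
rewrite /t /gluon_radius -/a -/b; case: ifP => [/eqP G0|_].
  have -> : a = 0 by rewrite /a G0 dual0.
  by rewrite !mul0r expr0n /= mulr0 mul0r oppr0 add0r !mul0r oppr0.
have [b00|bn0] := eqVneq b 0.
  by rewrite b00 invr0 !mulr0 !mul0r oppr0 addr0.
by field.
Qed.

Lemma sq_lb (R : realType) (a b mu : R) : 0 <= b -> (b = 0 -> a = 0) ->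
  2 * mu * a - mu ^+ 2 * b <= a ^+ 2 / b.
Proof.
move=> b0 hb; have [b00|bn0] := eqVneq b 0.
  by rewrite b00 (hb b00) !mulr0 subrr expr0n /= mul0r.
have bp : 0 < b by rewrite lt_def bn0.
have : 0 <= (a - mu * b) ^+ 2 / b by rewrite divr_ge0 // sqr_ge0.
have -> : (a - mu * b) ^+ 2 / b = a ^+ 2 / b - (2 * mu * a - mu ^+ 2 * b).
  by field.
by rewrite subr_ge0.
Qed.

Theorem theorem1 (R : realType) (p : nat) (m n : 'I_p -> nat)
  (N : forall i : 'I_p, 'M[R]_(m i, n i) -> R)
  (f : prodS R m n -> R) (g : prodS R m n -> prodS R m n)
  (L0 L1 : 'I_p -> R) (eps : R) (Xs : nat -> prodS R m n) :
  (forall i, is_norm (N i)) ->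
  C1_with_gradient f g ->
  (exists c : R, forall X, c <= f X) ->
  (forall i, 0 <= L0 i) ->
  (forall i, 0 < L1 i) ->
  layerwise_L0L1_smooth N g L0 L1 ->
  0 < eps ->
  gluon_iterates N g L0 L1 Xs ->
  let Delta0 := f (Xs 0%N) - inf (range f) in
  let H := (\sum_(j < p) (L1 j)^-1) / p%:R in
  let K := Num.ceil (2 * Delta0 * (\sum_(i < p) L0 i / (L1 i ^+ 2)) / (eps ^+ 2 * H ^+ 2)
                     + 2 * Delta0 / (eps * H)) in
  (1 <= K)%R ->
  exists k : nat, (k%:Z < K)%R /\
    \sum_(i < p) ((L1 i)^-1 / H) * dual_norm (N i) (g (Xs k) i) <= eps.
Proof.
move=> hN [hg _] [c0 hc0] hL0 hL1 hs he hit Delta0 H K HK.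
have step := @step_dec R p m n N f g L0 L1 Xs hN hg hL0 hL1 hs hit.
set A := \sum_(i < p) L0 i / (L1 i ^+ 2).
have A0 : 0 <= A by apply: sumr_ge0 => i _; rewrite divr_ge0 // ltW // exprn_gt0.
have [p0|ppos] := eqVneq p 0%N.
  exfalso; move: HK; rewrite /K /H /A.
  move: (L0) (L1) hL1; rewrite p0 => l0 l1 _.
  by rewrite !big_ord0 !mul0r expr0n /= !mulr0 invr0 !mulr0 addr0 ceil0.
have Hpos : 0 < H.
  have i0 : 'I_p by exists 0%N; rewrite lt0n.
  rewrite /H divr_gt0 ?ltr0n ?lt0n //.
  rewrite (bigD1 i0) //= ltr_pwDl ?invr_gt0 //.
  by apply: sumr_ge0 => i _; rewrite invr_ge0 ltW.
pose a k i := dual_norm (N i) (g (Xs k) i).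
pose T k := \sum_(i < p) a k i / L1 i.
have a0 : forall k i, 0 <= a k i by move=> k i; exact: dual_ge0.
set lam := H * eps / (A + H * eps).
have He : 0 < H * eps by rewrite mulr_gt0.
have lam0 : 0 < lam by rewrite divr_gt0 // ltr_wpDl.
have lam1 : lam <= 1 by rewrite ler_pdivrMr ?ltr_wpDl // mul1r lerDr.
have lower : forall k, (2 * lam - lam ^+ 2) * T k - lam ^+ 2 * A <=
    \sum_i a k i ^+ 2 / (L0 i + L1 i * a k i).
  move=> k.
  have -> : (2 * lam - lam ^+ 2) * T k - lam ^+ 2 * A =
      \sum_i (2 * (lam / L1 i) * a k i - (lam / L1 i) ^+ 2 * (L0 i + L1 i * a k i)).
    rewrite /T /A !mulr_sumr -sumrB; apply: eq_bigr => i _.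
    by field; rewrite gt_eqF.
  apply: ler_sum => i _; apply: sq_lb.
    by rewrite addr_ge0 // mulr_ge0 // ltW.
  move=> /eqP; rewrite paddr_eq0 ?mulr_ge0 // ?ltW // => /andP[_].
  by rewrite mulf_eq0 gt_eqF //= => /eqP.
set c := ((2 * lam - lam ^+ 2) * (H * eps) - lam ^+ 2 * A) / 2.
have cE : c = (H * eps) ^+ 2 / (2 * (A + H * eps)).
  rewrite /c /lam; field; rewrite gt_eqF // ltr_wpDl //.
have c0pos : 0 < c by rewrite cE divr_gt0 ?exprn_gt0 // mulr_gt0 // ltr_wpDl.
have [//|Hno] := pselect (exists k : nat, (k%:Z < K)%R /\
    \sum_(i < p) ((L1 i)^-1 / H) * dual_norm (N i) (g (Xs k) i) <= eps).
exfalso.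
have [Kn HKn] : exists Kn : nat, K = Kn%:Z.
  by exists `|K|%N; rewrite gez0_abs // (le_trans _ HK).
have big : forall k : nat, (k < Kn)%N -> f (Xs k.+1) < f (Xs k) - c.
  move=> k hk.
  have Sk : eps < T k / H.
    rewrite ltNge; apply/negP => hle; apply: Hno; exists k; split.
      by rewrite HKn ltz_nat.
    apply: le_trans hle; rewrite le_eqVlt; apply/orP; left; apply/eqP.
    rewrite /T mulr_suml; apply: eq_bigr => i _; rewrite /a; field.
    by rewrite !gt_eqF.
  have Tk : H * eps < T k by rewrite mulrC -ltr_pdivlMr.
  apply: (le_lt_trans (step k)); rewrite ltrD2l ltrN2.
  have lo := lower k.
  rewrite /c ltr_pM2r ?invr_gt0 ?ltr0Sn //.
  apply: lt_le_trans lo; rewrite ltrD2r.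
  have pos : 0 < 2 * lam - lam ^+ 2.
    have -> : 2 * lam - lam ^+ 2 = lam * (2 - lam) by rewrite expr2; ring.
    by rewrite mulr_gt0 // subr_gt0; lra.
  by rewrite ltr_pM2l.
have ind : forall j : nat, (j <= Kn)%N -> f (Xs j) + j%:R * c <= f (Xs 0%N).
  elim => [|j IH] hj; first by rewrite mul0r addr0.
  have := big j hj; have := IH (ltnW hj); rewrite -natr1 mulrDl mul1r; lra.
have Kn1 : (1 <= Kn)%N by move: HK; rewrite HKn lez_nat.
move: HKn Kn1 big ind; case: Kn => [//|j] HKn _ big ind.
have hbig := big j (ltnSn j).
have hind := ind j (leqnSn j).
have hinf : inf (range f) <= f (Xs j.+1).
  apply: ge_inf; last by exists (Xs j.+1).
  by exists c0 => _ [X _ <-]; exact: hc0.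
set v := 2 * Delta0 * A / (eps ^+ 2 * H ^+ 2) + 2 * Delta0 / (eps * H).
have hceil : v <= j.+1%:R.
  have := ceil_ge v; rewrite -/K HKn; by [].
have vc : v * c = Delta0.
  rewrite cE /v; field; rewrite !gt_eqF ?ltr_wpDl //.
have := ler_wpM2r (ltW c0pos) hceil; rewrite vc.
rewrite /Delta0 -natr1 mulrDl mul1r in hind *.
Show. lra.
Qed.
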